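(* Let $(R,\mathfrak m)$ be a Cohen–Macaulay local ring of dimension $d\ge1$ with infinite residue field, $I$ an $\mathfrak m$-primary ideal, $x\in I$ a superficial element for $I$, $S=R/(x)$ and $I'=I/(x)=IS$. Then: (1) if $\operatorname{n}(I)>\rho(I)-1$, then $\operatorname{n}(I')=\operatorname{n}(I)+1$; (2) if $\operatorname{n}(I)=\rho(I)-1$, then $\operatorname{n}(I')\le\operatorname{n}(I)+1$; (3) if $\operatorname{n}(I)<\rho(I)-1$, then $\operatorname{n}(I')\ge\operatorname{n}(I)+1$.
   Context: $\lambda$ denotes length. For an $\mathfrak m$-primary ideal $K$ of a local ring $A$, $H_K(n)=\lambda(A/K^n)$ is the Hilbert–Samuel function and $P_K$ the Hilbert–Samuel polynomial (the polynomial with $P_K(n)=H_K(n)$ for all $n\gg0$). The postulation number is $\operatorname{n}(K)=\min\{n\in\mathbb Z: P_K(t)=H_K(t)\text{ for all } t>n\}$. The Ratliff–Rush closure of an ideal $K$ is $\widetilde K=\bigcup_{n\ge1}(K^{n+1}:K^n)$. The stability index of the Ratliff–Rush filtration is $\rho(I)=\min\{i\ge1:\widetilde{I^n}=I^n\text{ for all } n\ge i\}$. An element $x\in I$ is superficial for $I$ if there is $c>0$ with $(I^{n+1}:x)\cap I^c=I^n$ for all $n\ge c$. *)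

(* Defs.v *)
From HB Require Import structures.
From mathcomp Require Import all_boot all_order all_algebra.
Set Implicit Arguments. Unset Strict Implicit. Unset Printing Implicit Defensive.
Import Order.TTheory GRing.Theory Num.Theory.
Local Open Scope ring_scope.

Definition is_ideal (A : comPzRingType) (J : A -> Prop) : Prop :=
  [/\ J 0, (forall a b, J a -> J b -> J (a + b)) & (forall r a, J a -> J (r * a))].

Definition subI (A : Type) (J K : A -> Prop) : Prop := forall z, J z -> K z.
Definition eqI (A : Type) (J K : A -> Prop) : Prop := forall z, J z <-> K z.
Definition ssubI (A : Type) (J K : A -> Prop) : Prop := subI J K /\ ~ subI K J.

Definition fullI (A : Type) : A -> Prop := fun _ => True.

Definition gen (A : comPzRingType) (X : A -> Prop) : A -> Prop :=
  fun z => forall J, is_ideal J -> subI X J -> J z.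

Definition iprod (A : comPzRingType) (K L : A -> Prop) : A -> Prop :=
  gen (fun z => exists a b, [/\ K a, L b & z = a * b]).

Fixpoint ipow (A : comPzRingType) (K : A -> Prop) (n : nat) : A -> Prop :=
  match n with
  | 0 => @fullI A
  | n'.+1 => iprod (ipow K n') K
  end.

Definition ipowz (A : comPzRingType) (K : A -> Prop) (t : int) : A -> Prop :=
  if (t <= 0)%R then @fullI A else ipow K (absz t).

Definition icolon (A : comPzRingType) (K L : A -> Prop) : A -> Prop :=
  fun r => forall b, L b -> K (r * b).

Definition principal (A : comPzRingType) (x : A) : A -> Prop :=
  fun z => exists a, z = a * x.

(* a strictly increasing chain J <= c 0 < c 1 < ... < c k of ideals of A;
   such chains correspond to chains of submodules of A/J of length k *)
Definition ideal_chain (A : comPzRingType) (J : A -> Prop)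
    (c : nat -> (A -> Prop)) (k : nat) : Prop :=
  [/\ forall i, (i <= k)%N -> is_ideal (c i),
      subI J (c 0%N) &
      forall i, (i < k)%N -> ssubI (c i) (c i.+1)].

(* length_is J l  <->  lambda(A/J) = l (finite) *)
Definition length_is (A : comPzRingType) (J : A -> Prop) (l : nat) : Prop :=
  (exists c, ideal_chain J c l) /\ (forall c k, ideal_chain J c k -> (k <= l)%N).

Definition HS_agree (A : comPzRingType) (K : A -> Prop) (P : {poly rat}) (t : int)
    : Prop :=
  exists l, length_is (ipowz K t) l /\ P.[t%:~R] = l%:R.

(* postulation K n  <->  n(K) = n : the polynomial P agreeing with H_K for all
   t > n (hence P = P_K) and n is minimal, i.e. P(n) <> H_K(n). *)
Definition postulation (A : comPzRingType) (K : A -> Prop) (n : int) : Prop :=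
  exists P : {poly rat},
    (forall t : int, (n < t)%R -> HS_agree K P t) /\ ~ HS_agree K P n.

Definition ratliff_rush (A : comPzRingType) (K : A -> Prop) : A -> Prop :=
  fun z => exists n, (1 <= n)%N /\ icolon (ipow K n.+1) (ipow K n) z.

Definition RR_stable_from (A : comPzRingType) (I : A -> Prop) (i : nat) : Prop :=
  forall n, (i <= n)%N -> eqI (ratliff_rush (ipow I n)) (ipow I n).

Definition rho_is (A : comPzRingType) (I : A -> Prop) (r : nat) : Prop :=
  [/\ (1 <= r)%N, RR_stable_from I r &
      forall i, (1 <= i)%N -> (i < r)%N -> ~ RR_stable_from I i].

Definition superficial (A : comPzRingType) (I : A -> Prop) (x : A) : Prop :=
  I x /\ exists c, (0 < c)%N /\ forall n, (c <= n)%N ->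
    eqI (fun z => ipow I n.+1 (z * x) /\ ipow I c z) (ipow I n).

(* the set of non-units; R is local iff this is an ideal (it is then m) *)
Definition nonunits (R : comUnitRingType) : R -> Prop := fun z => z \isn't a GRing.unit.

Definition is_local (R : comUnitRingType) : Prop := is_ideal (@nonunits R).

Definition noetherian (A : comPzRingType) : Prop :=
  forall c : nat -> (A -> Prop), (forall i, is_ideal (c i)) ->
    (forall i, subI (c i) (c i.+1)) ->
    exists N, forall i, (N <= i)%N -> subI (c i) (c N).

Definition is_prime_ideal (A : comPzRingType) (P : A -> Prop) : Prop :=
  [/\ is_ideal P, ~ P 1 & forall a b, P (a * b) -> P a \/ P b].

Definition prime_chain (A : comPzRingType) (c : nat -> (A -> Prop)) (k : nat) : Prop :=
  (forall i, (i <= k)%N -> is_prime_ideal (c i)) /\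
  (forall i, (i < k)%N -> ssubI (c i) (c i.+1)).

Definition dim_is (A : comPzRingType) (d : nat) : Prop :=
  (exists c : nat -> (A -> Prop), prime_chain c d) /\ (forall (c : nat -> (A -> Prop)) k, prime_chain c k -> (k <= d)%N).

Definition gen_seq (A : comPzRingType) (s : seq A) : A -> Prop :=
  gen (fun z => z \in s).

Definition regular_seq (A : comPzRingType) (xs : seq A) : Prop :=
  (forall i, (i < size xs)%N -> forall r,
      gen_seq (take i xs) (nth 0 xs i * r) -> gen_seq (take i xs) r) /\
  ~ gen_seq xs 1.

Definition depth_is (R : comUnitRingType) (k : nat) : Prop :=
  (exists xs : seq R, [/\ size xs = k, all (fun z => z \isn't a GRing.unit) xs & regular_seq xs]) /\
  (forall xs : seq R, all (fun z => z \isn't a GRing.unit) xs -> regular_seq xs -> (size xs <= k)%N).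

(* residue field R/m infinite: infinitely many elements pairwise distinct mod m *)
Definition infinite_residue_field (R : comUnitRingType) : Prop :=
  exists f : nat -> R, forall i j, i <> j -> (f i - f j) \is a GRing.unit.

(* m-primary ideal: proper ideal whose radical is m *)
Definition m_primary (R : comUnitRingType) (I : R -> Prop) : Prop :=
  [/\ is_ideal I, subI I (@nonunits R) &
      forall z, nonunits z -> exists k, I (z ^+ k)].

Definition ext_ideal (R S : comPzRingType) (f : R -> S) (I : R -> Prop) : S -> Prop :=
  gen (fun s => exists a, I a /\ s = f a).

(* Main.v *)
Require Import Defs.
From Stdlib Require Import Classical.
From Stdlib Require Import IndefiniteDescription.
From HB Require Import structures.
From mathcomp Require Import all_boot all_order all_algebra.
Set Implicit Arguments. Unset Strict Implicit. Unset Printing Implicit Defensive.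
Import Order.TTheory GRing.Theory Num.Theory.
Local Open Scope ring_scope.
Lemma idealD (A : comPzRingType) (J : A -> Prop) a b :
  is_ideal J -> J a -> J b -> J (a + b).
Proof. by case=> _ H _; apply: H. Qed.
Lemma idealM (A : comPzRingType) (J : A -> Prop) r a :
  is_ideal J -> J a -> J (r * a).
Proof. by case=> _ _ H; apply: H. Qed.
Lemma idealMr (A : comPzRingType) (J : A -> Prop) r a :
  is_ideal J -> J a -> J (a * r).
Proof. by move=> HJ Ha; rewrite mulrC; apply: idealM. Qed.
Lemma ideal0 (A : comPzRingType) (J : A -> Prop) : is_ideal J -> J 0.
Proof. by case. Qed.
Lemma idealN (A : comPzRingType) (J : A -> Prop) a :
  is_ideal J -> J a -> J (- a).
Proof. by move=> HJ Ha; rewrite -mulN1r; apply: idealM. Qed.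
Lemma idealB (A : comPzRingType) (J : A -> Prop) a b :
  is_ideal J -> J a -> J b -> J (a - b).
Proof. by move=> HJ Ha Hb; apply: idealD => //; apply: idealN. Qed.

Lemma full_ideal (A : comPzRingType) : is_ideal (@fullI A).
Proof. by []. Qed.

Lemma gen_ideal (A : comPzRingType) (X : A -> Prop) : is_ideal (gen X).
Proof.
split.
- by move=> J HJ _; apply: ideal0.
- by move=> a b Ha Hb J HJ HX; apply: idealD => //; [apply: Ha|apply: Hb].
- by move=> r a Ha J HJ HX; apply: idealM => //; apply: Ha.
Qed.
Lemma gen_sub (A : comPzRingType) (X : A -> Prop) : subI X (gen X).
Proof. by move=> z Hz J HJ HX; apply: HX. Qed.
Lemma gen_min (A : comPzRingType) (X J : A -> Prop) :
  is_ideal J -> subI X J -> subI (gen X) J.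
Proof. by move=> HJ HX z Hz; apply: Hz. Qed.

Lemma ipow_ideal (A : comPzRingType) (I : A -> Prop) n : is_ideal (ipow I n).
Proof. by case: n => [|n] /=; [apply: full_ideal | apply: gen_ideal]. Qed.

Lemma ipowS_gen (A : comPzRingType) (I : A -> Prop) n a b :
  ipow I n a -> I b -> ipow I n.+1 (a * b).
Proof. by move=> Ha Hb; apply: gen_sub; exists a, b. Qed.

Lemma ipow_mul (A : comPzRingType) (I : A -> Prop) a b u v :
  is_ideal I -> ipow I a u -> ipow I b v -> ipow I (a + b) (u * v).
Proof.
move=> HI Hu; elim: b v => [|b IH] v /=.
  by move=> _; rewrite addn0 mulrC; exact: (idealM _ (ipow_ideal _ _)).
move=> Hv; rewrite addnS.
pose K := fun w => ipow I (a + b).+1 (u * w).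
have HK : is_ideal K.
  split; rewrite /K.
  - by rewrite mulr0; exact: (ideal0 (ipow_ideal _ _)).
  - by move=> p q Hp Hq; rewrite mulrDr; exact: (idealD (ipow_ideal _ _)).
  - by move=> r p Hp; rewrite mulrCA; exact: (idealM _ (ipow_ideal _ _)).
apply: (gen_min HK _ Hv) => w [p [q [Hp Hq ->]]].
by rewrite /K mulrA; apply: ipowS_gen => //; apply: IH.
Qed.

Lemma ipow_in (A : comPzRingType) (I : A -> Prop) n :
  is_ideal I -> subI (ipow I n.+1) (ipow I n).
Proof.
move=> HI; apply: gen_min; first exact: ipow_ideal.
by move=> w [p [q [Hp Hq ->]]]; apply: idealMr => //; apply: ipow_ideal.
Qed.

Lemma ipow_le (A : comPzRingType) (I : A -> Prop) m n :
  is_ideal I -> (m <= n)%N -> subI (ipow I n) (ipow I m).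
Proof.
move=> HI; elim: n => [|n IH]; first by rewrite leqn0 => /eqP ->.
rewrite leq_eqVlt => /orP [/eqP -> //|]; rewrite ltnS => /IH H z Hz.
by apply: H; apply: ipow_in.
Qed.

Lemma ipow1 (A : comPzRingType) (I : A -> Prop) :
  is_ideal I -> eqI (ipow I 1) I.
Proof.
move=> HI z; split.
  apply: gen_min => // w [p [q [_ Hq ->]]]; exact: idealM.
by move=> Hz; rewrite -(mul1r z); apply: ipowS_gen.
Qed.

Lemma ipow_split (A : comPzRingType) (I : A -> Prop) a b :
  is_ideal I -> subI (ipow I (a + b)) (iprod (ipow I a) (ipow I b)).
Proof.
move=> HI; elim: b => [|b IH].
  move=> z Hz; rewrite addn0 in Hz; rewrite -(mulr1 z); apply: gen_sub.
  by exists z, 1.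
rewrite addnS; apply: gen_min; first exact: gen_ideal.
move=> w [u [v [Hu Hv ->]]].
pose K := fun u => iprod (ipow I a) (ipow I b.+1) (u * v).
have HK : is_ideal K.
  split; rewrite /K.
  - by rewrite mul0r; exact: (ideal0 (gen_ideal _)).
  - by move=> p q Hp Hq; rewrite mulrDl; exact: (idealD (gen_ideal _)).
  - by move=> r p Hp; rewrite -mulrA; exact: (idealM _ (gen_ideal _)).
apply: (gen_min HK _ (IH _ Hu)) => y [p [q [Hp Hq ->]]].
rewrite /K -mulrA; apply: gen_sub; exists p, (q * v); split => //.
exact: ipowS_gen.
Qed.

Lemma iprod_sub (A : comPzRingType) (K L M : A -> Prop) :
  is_ideal M -> (forall a b, K a -> L b -> M (a * b)) -> subI (iprod K L) M.
Proof. move=> HM H; apply: gen_min => // w [a [b [Ha Hb ->]]]; exact: H. Qed.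

Lemma iprod_mono (A : comPzRingType) (K K' L : A -> Prop) :
  subI K K' -> subI (iprod K L) (iprod K' L).
Proof.
move=> H; apply: iprod_sub; first exact: gen_ideal.
by move=> a b Ha Hb; apply: gen_sub; exists a, b; split => //; apply: H.
Qed.

Lemma ipow_ipow (A : comPzRingType) (I : A -> Prop) n m :
  is_ideal I -> eqI (ipow (ipow I n) m) (ipow I (n * m)).
Proof.
move=> HI; elim: m => [|m IH] z; first by rewrite muln0.
rewrite mulnS /=; split.
  apply: iprod_sub; first exact: ipow_ideal.
  by move=> a b Ha Hb; rewrite mulrC; apply: ipow_mul => //; apply/IH.
move=> Hz; rewrite addnC in Hz; have := ipow_split HI Hz.
by apply: iprod_mono => w /IH.
Qed.

Lemma chain_mono (A : comPzRingType) (J : A -> Prop) c k i j :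
  ideal_chain J c k -> (i <= j)%N -> (j <= k)%N -> subI (c i) (c j).
Proof.
case=> _ _ Hs Hij; elim: j Hij => [|j IH].
  by rewrite leqn0 => /eqP -> _.
rewrite leq_eqVlt => /orP [/eqP -> _ z //|]; rewrite ltnS => Hij Hjk z Hz.
by apply: (Hs j Hjk).1; apply: IH => //; apply: ltnW.
Qed.

Lemma chain_base (A : comPzRingType) (J : A -> Prop) c k i :
  ideal_chain J c k -> (i <= k)%N -> subI J (c i).
Proof.
move=> Hc Hik z Hz; apply: (chain_mono Hc (leq0n i) Hik).
by case: Hc => _ H _; apply: H.
Qed.

Lemma chain_sub (A : comPzRingType) (J K : A -> Prop) c k :
  subI J K -> ideal_chain K c k -> ideal_chain J c k.
Proof. by move=> HJK [H1 H2 H3]; split => // z Hz; apply/H2/HJK. Qed.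

Lemma chain0 (A : comPzRingType) (J : A -> Prop) : ideal_chain J (fun _ => @fullI A) 0.
Proof. by split. Qed.

Lemma length_uniq (A : comPzRingType) (J : A -> Prop) l1 l2 :
  length_is J l1 -> length_is J l2 -> l1 = l2.
Proof.
move=> [[c1 H1] B1] [[c2 H2] B2]; apply/eqP; rewrite eqn_leq.
by rewrite (B2 _ _ H1) (B1 _ _ H2).
Qed.

Lemma length_eqI (A : comPzRingType) (J K : A -> Prop) l :
  eqI J K -> length_is J l -> length_is K l.
Proof.
move=> E [[c Hc] B]; split.
  by exists c; apply: (chain_sub _ Hc) => z /E.
by move=> c' k Hc'; apply: (B c'); apply: (chain_sub _ Hc') => z /E.
Qed.

Lemma bounded_length (A : comPzRingType) (J : A -> Prop) N :
  (forall c k, ideal_chain J c k -> (k <= N)%N) -> exists l, length_is J l.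
Proof.
elim: N => [|N IH] B.
  by exists 0%N; split => //; exists (fun _ => @fullI A); apply: chain0.
case: (classic (exists c, ideal_chain J c N.+1)) => [Hc|Hn].
  by exists N.+1.
apply: IH => c k Hc; have := B c k Hc; rewrite leq_eqVlt => /orP [/eqP Ek|//].
by case: Hn; exists c; rewrite -Ek.
Qed.

Lemma length_sub (A : comPzRingType) (J K : A -> Prop) l :
  subI J K -> length_is J l -> exists l', length_is K l' /\ (l' <= l)%N.
Proof.
move=> HJK [_ B].
have [l' Hl'] : exists l', length_is K l'.
  by apply: (bounded_length (N := l)) => c k Hc; apply: (B c); apply: chain_sub Hc.
exists l'; split => //; case: Hl' => [[c Hc] _]; apply: (B c).
exact: chain_sub Hc.
Qed.

Lemma length_ssub (A : comPzRingType) (J K : A -> Prop) l l' :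
  is_ideal J -> ssubI J K -> length_is J l -> length_is K l' -> (l' < l)%N.
Proof.
move=> HJ [HJK HKJ] [_ B] [[c Hc] _].
pose c' := fun i => if i is i'.+1 then c i' else J.
apply: (B c'); split.
- by case=> [|i] //= Hi; case: Hc => H _ _; apply: H.
- by [].
- case=> [|i] /= Hi.
    split; first by move=> z Hz; apply: (chain_base Hc (leq0n l')); apply: HJK.
    move=> H; apply: HKJ => z Hz; apply: H.
    by case: Hc => _ H0 _; apply: H0.
  by case: Hc => _ _ H; apply: H.
Qed.
Definition addx (A : comPzRingType) (J : A -> Prop) (x : A) : A -> Prop :=
  fun z => exists j r, J j /\ z = j + r * x.
Definition colx (A : comPzRingType) (J : A -> Prop) (x : A) : A -> Prop :=
  fun r => J (r * x).
Definition Jx (A : comPzRingType) (J B : A -> Prop) (x : A) : A -> Prop :=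
  fun z => exists j w, [/\ J j, B w & z = j + w * x].

Lemma addx_ideal (A : comPzRingType) (J : A -> Prop) x :
  is_ideal J -> is_ideal (addx J x).
Proof.
move=> HJ; split.
- by exists 0, 0; rewrite mul0r addr0; split => //; apply: ideal0.
- move=> a b [j [r [Hj ->]]] [j' [r' [Hj' ->]]]; exists (j + j'), (r + r').
  by split; [apply: idealD | rewrite mulrDl addrACA].
- move=> s a [j [r [Hj ->]]]; exists (s * j), (s * r).
  by split; [apply: idealM | rewrite mulrDr mulrA].
Qed.

Lemma addx_sub (A : comPzRingType) (J : A -> Prop) x : subI J (addx J x).
Proof. by move=> z Hz; exists z, 0; rewrite mul0r addr0. Qed.

Lemma addx_mono (A : comPzRingType) (J K : A -> Prop) x :
  subI J K -> subI (addx J x) (addx K x).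
Proof. by move=> H z [j [r [Hj ->]]]; exists j, r; split => //; apply: H. Qed.

Lemma colx_ideal (A : comPzRingType) (J : A -> Prop) x :
  is_ideal J -> is_ideal (colx J x).
Proof.
move=> HJ; split; rewrite /colx.
- by rewrite mul0r; apply: ideal0.
- by move=> a b Ha Hb; rewrite mulrDl; apply: idealD.
- by move=> r a Ha; rewrite -mulrA; apply: idealM.
Qed.

Lemma colx_mono (A : comPzRingType) (J K : A -> Prop) x :
  subI J K -> subI (colx J x) (colx K x).
Proof. by move=> H z; apply: H. Qed.

Lemma Jx_ideal (A : comPzRingType) (J B : A -> Prop) x :
  is_ideal J -> is_ideal B -> is_ideal (Jx J B x).
Proof.
move=> HJ HB; split.
- by exists 0, 0; rewrite mul0r addr0; split => //; apply: ideal0.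
- move=> a b [j [r [Hj Hr ->]]] [j' [r' [Hj' Hr' ->]]]; exists (j + j'), (r + r').
  by split; [apply: idealD | apply: idealD | rewrite mulrDl addrACA].
- move=> s a [j [r [Hj Hr ->]]]; exists (s * j), (s * r).
  by split; [apply: idealM | apply: idealM | rewrite mulrDr mulrA].
Qed.

Lemma Jx_addx (A : comPzRingType) (J B : A -> Prop) x : subI (Jx J B x) (addx J x).
Proof. by move=> z [j [w [Hj _ ->]]]; exists j, w. Qed.

Lemma Jx_strict (A : comPzRingType) (J B C : A -> Prop) x :
  is_ideal J -> is_ideal B -> is_ideal C -> subI (colx J x) B -> ssubI B C ->
  ssubI (Jx J B x) (Jx J C x).
Proof.
move=> HJ HB HC HcB [HBC HCB]; split.
  by move=> z [j [w [Hj Hw ->]]]; exists j, w; split => //; apply: HBC.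
move=> H; apply: HCB => w Hw.
have [j [w' [Hj Hw' E]]] : Jx J B x (w * x).
  by apply: H; exists 0, w; rewrite add0r; split => //; apply: ideal0.
have Hd : B (w - w').
  apply: HcB; rewrite /colx mulrBl E addrK //.
by rewrite -(subrK w' w); apply: idealD.
Qed.

Lemma concat_chain (A : comPzRingType) (J : A -> Prop) x a b p q :
  is_ideal J -> ideal_chain (addx J x) a p -> ideal_chain (colx J x) b q ->
  ideal_chain J (fun i => if (i <= q)%N then Jx J (b i) x else a (i - q)%N) (q + p).
Proof.
move=> HJ Ha Hb; case: (Ha) => Ia Ba Sa; case: (Hb) => Ib Bb Sb.
split.
- move=> i Hi; case: ifP => Hiq; first by apply: Jx_ideal => //; apply: Ib.
  by apply: Ia; rewrite leq_subLR.
- by rewrite leq0n => z Hz; exists z, 0; rewrite mul0r addr0; split => //;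
    apply: ideal0; apply: Ib.
- move=> i Hi; case: (ltngtP i q) => Hiq.
  + apply: Jx_strict => //; try (apply: Ib; by [apply: ltnW | ]).
      exact: (chain_base Hb (ltnW Hiq)).
    exact: Sb.
  + rewrite subSn ?(ltnW Hiq) //.
    by apply: Sa; rewrite ltn_subLR // ltnW.
  + subst i; rewrite subSnn; have Hp : (0 < p)%N by rewrite -{1}(addn0 q) ltn_add2l in Hi.
    case: (Sa 0%N Hp) => H01 H10; split.
      move=> z Hz; apply: H01; apply: Ba; exact: Jx_addx Hz.
    move=> H; apply: H10 => z /H Hz; apply: Ba; exact: Jx_addx Hz.
Qed.
Lemma ext_chain (A : comPzRingType) (J X Y : A -> Prop) ca s :
  ideal_chain J ca s -> eqI (ca s) X -> is_ideal Y -> subI X Y -> ~ subI Y X ->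
  ideal_chain J (fun i => if i == s.+1 then Y else ca i) s.+1 /\
  eqI (if s.+1 == s.+1 then Y else ca s.+1) Y.
Proof.
move=> [I0 B0 S0] E HY HXY HYX; rewrite eqxx; split => //; split.
- move=> i Hi; case: eqP => // Ei; apply: I0.
  by move: Hi; rewrite leq_eqVlt => /orP [/eqP //|]; rewrite ltnS.
- by [].
- move=> i Hi; rewrite (_ : (i == s.+1) = false); last by apply/negbTE; rewrite neq_ltn Hi.
  case: (eqVneq i s) => [->|Nis]; first rewrite eqxx.
    split; first by move=> z /E /HXY.
    by move=> H; apply: HYX => z /H /E.
  rewrite eqSS (negbTE Nis); apply: S0; rewrite ltnS leq_eqVlt in Hi.
  by case/orP: Hi => [/eqP Hi|//]; rewrite Hi eqxx in Nis.
Qed.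

Lemma pair_extract (A : comPzRingType) (a b : nat -> A -> Prop) k :
  (forall i, (i <= k)%N -> is_ideal (a i) /\ is_ideal (b i)) ->
  (forall i, (i < k)%N -> [/\ subI (a i) (a i.+1), subI (b i) (b i.+1) &
        (~ subI (a i.+1) (a i) \/ ~ subI (b i.+1) (b i))]) ->
  exists s1 s2 ca cb, [/\ (k <= s1 + s2)%N, ideal_chain (a 0%N) ca s1,
     eqI (ca s1) (a k), ideal_chain (b 0%N) cb s2 & eqI (cb s2) (b k)].
Proof.
elim: k => [|k IH] HI HS.
  exists 0%N, 0%N, (fun _ => a 0%N), (fun _ => b 0%N); split => //.
  - by split; [move=> i _; case: (HI 0%N (leqnn 0)) | move=> z | ].
  - by split; [move=> i _; case: (HI 0%N (leqnn 0)) | move=> z | ].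
have [s1 [s2 [ca [cb [Hk Ca Ea Cb Eb]]]]] := IH
  (fun i Hi => HI i (leqW Hi)) (fun i Hi => HS i (ltnW Hi)).
have [Ha Hb Hor] := HS k (leqnn _).
have [IAk IBk] := HI k.+1 (leqnn _).
case: (classic (subI (a k.+1) (a k))) => HA; case: (classic (subI (b k.+1) (b k))) => HB.
- by case: Hor.
- have [Cb' Eb'] := ext_chain Cb Eb IBk Hb HB.
  exists s1, s2.+1, ca, (fun i => if i == s2.+1 then b k.+1 else cb i); split; [by rewrite addnS | exact: Ca | | exact: Cb' | exact: Eb'].
  by move=> z; split => [/Ea/Ha // | /HA/Ea].
- have [Ca' Ea'] := ext_chain Ca Ea IAk Ha HA.
  exists s1.+1, s2, (fun i => if i == s1.+1 then a k.+1 else ca i), cb; split; [by rewrite addSn | exact: Ca' | exact: Ea' | exact: Cb |].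
  by move=> z; split => [/Eb/Hb // | /HB/Eb].
- have [Ca' Ea'] := ext_chain Ca Ea IAk Ha HA.
  have [Cb' Eb'] := ext_chain Cb Eb IBk Hb HB.
  exists s1.+1, s2.+1, (fun i => if i == s1.+1 then a k.+1 else ca i), (fun i => if i == s2.+1 then b k.+1 else cb i); split; [ | exact: Ca' | exact: Ea' | exact: Cb' | exact: Eb'].
  by rewrite addSn addnS ltnS ltnW.
Qed.

Lemma modular_step (A : comPzRingType) (C D : A -> Prop) x :
  is_ideal C -> is_ideal D -> subI C D ->
  subI (addx D x) (addx C x) -> subI (colx D x) (colx C x) -> subI D C.
Proof.
move=> HC HD HCD Ha Hc z Hz.
have [u [r [Hu E]]] : addx C x z by apply: Ha; apply: addx_sub.
have Hr : colx D x r.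
  by rewrite /colx (_ : r * x = z - u); [apply: idealB => //; apply: HCD | rewrite E addrC addKr].
by rewrite E; apply: idealD => //; apply: Hc.
Qed.

Lemma length_split (A : comPzRingType) (J : A -> Prop) x l :
  is_ideal J -> length_is J l ->
  exists l1 l2, [/\ length_is (addx J x) l1, length_is (colx J x) l2 & l = (l1 + l2)%N].
Proof.
move=> HJ HL.
have HJx : subI J (addx J x) by apply: addx_sub.
have [l1 [Hl1 _]] := length_sub HJx HL.
have [l2 Hl2] : exists l2, length_is (colx J x) l2.
  apply: (bounded_length (N := l)) => c k Hc.
  have Ha0 : ideal_chain (addx J x) (fun _ => @fullI A) 0 by split.
  have := concat_chain HJ Ha0 Hc; rewrite addn0 => H.
  by case: HL => _ B; apply: B H.
exists l1, l2; split => //; apply/eqP; rewrite eqn_leq; apply/andP; split.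
  case: HL => [[c Hc] _].
  have Hideal : forall i, (i <= l)%N -> is_ideal (addx (c i) x) /\ is_ideal (colx (c i) x).
    by move=> i Hi; case: Hc => H _ _; split; [apply: addx_ideal | apply: colx_ideal]; apply: H.
  have [|s1 [s2 [ca [cb [Hk Ca _ Cb _]]]]] := pair_extract Hideal.
    move=> i Hi; case: Hc => Ic _ Sc; have [Hs Hns] := Sc i Hi.
    split; [exact: addx_mono | exact: colx_mono |].
    apply: NNPP => Hn; apply: Hns; apply: (@modular_step _ _ _ x).
    + by apply: Ic; apply: ltnW.
    + by apply: Ic.
    + exact: Hs.
    + by apply: NNPP => H; apply: Hn; left.
    + by apply: NNPP => H; apply: Hn; right.
  apply: (leq_trans Hk); apply: leq_add.
    case: Hl1 => _ B; apply: (B ca); apply: chain_sub Ca; apply: addx_mono.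
    by case: Hc => _ H _.
  case: Hl2 => _ B; apply: (B cb); apply: chain_sub Cb; apply: colx_mono.
  by case: Hc => _ H _.
case: Hl1 => [[a Ha] _]; case: Hl2 => [[b Hb] _].
have := concat_chain HJ Ha Hb; case: HL => _ B /B.
by rewrite addnC.
Qed.
Definition preim (R S : comPzRingType) (f : R -> S) (K : S -> Prop) : R -> Prop :=
  fun r => K (f r).
Definition img (R S : comPzRingType) (f : R -> S) (D : R -> Prop) : S -> Prop :=
  fun s => exists r, D r /\ f r = s.

Lemma preim_ideal (R S : comPzRingType) (f : {rmorphism R -> S}) K :
  is_ideal K -> is_ideal (preim f K).
Proof.
move=> HK; split; rewrite /preim.
- by rewrite rmorph0; apply: ideal0.
- by move=> a b Ha Hb; rewrite rmorphD; apply: idealD.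
- by move=> r a Ha; rewrite rmorphM; apply: idealM.
Qed.

Lemma img_ideal (R S : comPzRingType) (f : {rmorphism R -> S}) D :
  (forall s, exists r, f r = s) -> is_ideal D -> is_ideal (img f D).
Proof.
move=> Hs HD; split.
- by exists 0; split; [apply: ideal0 | rewrite rmorph0].
- move=> a b [u [Hu <-]] [v [Hv <-]]; exists (u + v).
  by split; [apply: idealD | rewrite rmorphD].
- move=> s a [u [Hu <-]]; have [r <-] := Hs s; exists (r * u).
  by split; [apply: idealM | rewrite rmorphM].
Qed.

Lemma length_preim (R S : comPzRingType) (f : {rmorphism R -> S}) K l :
  (forall s, exists r, f r = s) -> is_ideal K ->
  length_is K l -> length_is (preim f K) l.
Proof.
move=> Hs HK [[c [Ic Bc Sc]] B]; split.
  exists (fun i => preim f (c i)); split.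
  - by move=> i Hi; apply: preim_ideal; apply: Ic.
  - by move=> r Hr; apply: Bc.
  - move=> i Hi; have [H1 H2] := Sc i Hi; split; first by move=> r; apply: H1.
    move=> H; apply: H2 => s Hs'; have [r Er] := Hs s; rewrite -Er in Hs' *.
    exact: H.
move=> d k [Id Bd Sd]; apply: (B (fun i => img f (d i))); split.
- by move=> i Hi; apply: img_ideal => //; apply: Id.
- by move=> s Hs'; have [r Er] := Hs s; exists r; split => //; apply: Bd; rewrite /preim Er.
- move=> i Hi; have [H1 H2] := Sd i Hi; split.
    by move=> s [r [Hr <-]]; exists r; split => //; apply: H1.
  move=> H; apply: H2 => z Hz.
  have [w [Hw Ew]] : img f (d i) (f z) by apply: H; exists z.
  have Hd0 : d i (z - w).
    have Hi' : (i <= k)%N by apply: ltnW.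
    have Hch : ideal_chain (preim f K) d k by split.
    apply: (chain_base Hch Hi'); rewrite /preim rmorphB Ew subrr; exact: ideal0.
  rewrite -(subrK w z); apply: idealD => //; apply: Id; exact: ltnW.
Qed.

Lemma length_preim_inv (R S : comPzRingType) (f : {rmorphism R -> S}) K l :
  (forall s, exists r, f r = s) -> is_ideal K ->
  length_is (preim f K) l -> length_is K l.
Proof.
move=> Hs HK [[d [Id Bd Sd]] B]; split.
  exists (fun i => img f (d i)); split.
  - by move=> i Hi; apply: img_ideal => //; apply: Id.
  - by move=> s Hs'; have [r Er] := Hs s; exists r; split => //; apply: Bd; rewrite /preim Er.
  - move=> i Hi; have [H1 H2] := Sd i Hi; split.
      by move=> s [r [Hr <-]]; exists r; split => //; apply: H1.
    move=> H; apply: H2 => z Hz.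
    have [w [Hw Ew]] : img f (d i) (f z) by apply: H; exists z.
    have Hd0 : d i (z - w).
      have Hi' : (i <= l)%N by apply: ltnW.
      have Hch : ideal_chain (preim f K) d l by split.
      apply: (chain_base Hch Hi'); rewrite /preim rmorphB Ew subrr; exact: ideal0.
    rewrite -(subrK w z); apply: idealD => //; apply: Id; exact: ltnW.
move=> c k [Ic Bc Sc]; apply: (B (fun i => preim f (c i))); split.
- by move=> i Hi; apply: preim_ideal; apply: Ic.
- by move=> r Hr; apply: Bc.
- move=> i Hi; have [H1 H2] := Sc i Hi; split; first by move=> r; apply: H1.
  move=> H; apply: H2 => s Hs'; have [r Er] := Hs s; rewrite -Er in Hs' *.
  exact: H.
Qed.

Lemma ipow_ext (R S : comPzRingType) (f : {rmorphism R -> S}) (I : R -> Prop) n :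
  (forall s, exists r, f r = s) -> is_ideal I ->
  eqI (ipow (ext_ideal f I) n) (img f (ipow I n)).
Proof.
move=> Hs HI; elim: n => [|n IH] s.
  by split => // _; have [r Er] := Hs s; exists r.
have Himg : forall m, is_ideal (img f (ipow I m)).
  by move=> m; apply: img_ideal => //; apply: ipow_ideal.
have Hext : subI (ext_ideal f I) (img f I).
  apply: gen_min; first exact: img_ideal.
  by move=> t [a [Ha ->]]; exists a.
split.
  apply: iprod_sub => // a b /IH [u [Hu <-]] /Hext [v [Hv <-]].
  by exists (u * v); split; [apply: ipowS_gen | rewrite rmorphM].
move=> [r [Hr <-]].
have HP : is_ideal (preim f (ipow (ext_ideal f I) n.+1)).
  by apply: preim_ideal; apply: ipow_ideal.
apply: (gen_min HP _ Hr) => w [u [v [Hu Hv ->]]].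
rewrite /preim rmorphM; apply: gen_sub; exists (f u), (f v); split => //.
  by apply/IH; exists u.
by apply: gen_sub; exists v.
Qed.

Lemma preim_img (R S : comPzRingType) (f : {rmorphism R -> S}) (J : R -> Prop) x :
  (forall r, f r = 0 <-> principal x r) -> is_ideal J ->
  eqI (preim f (img f J)) (addx J x).
Proof.
move=> Hk HJ r; split.
  move=> [j [Hj Ej]]; have : f (r - j) = 0 by rewrite rmorphB Ej subrr.
  move/Hk => [a Ea]; exists j, a; split => //; by rewrite -Ea addrC subrK.
move=> [j [a [Hj ->]]]; exists j; split => //.
have Hx : f x = 0 by apply/Hk; exists 1; rewrite mul1r.
by rewrite rmorphD rmorphM Hx mulr0 addr0.
Qed.
Lemma ipow_mul_gen (A : comPzRingType) (I : A -> Prop) z m n t b :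
  is_ideal I -> (forall u, ipow I m u -> ipow I (m + n) (z * u)) ->
  (m <= t)%N -> ipow I t b -> ipow I (t + n) (z * b).
Proof.
move=> HI H Hmt Hb; rewrite -(subnKC Hmt) in Hb *.
have := ipow_split HI Hb.
have HK : is_ideal (fun b => ipow I (m + (t - m) + n) (z * b)).
  split.
  - by rewrite mulr0; exact: (ideal0 (ipow_ideal _ _)).
  - by move=> p q Hp Hq; rewrite mulrDr; exact: (idealD (ipow_ideal _ _)).
  - by move=> r p Hp; rewrite mulrCA; exact: (idealM _ (ipow_ideal _ _)).
apply: (gen_min HK) => w [u [v [Hu Hv ->]]].
rewrite mulrA (_ : (m + (t - m) + n = (m + n) + (t - m))%N); last by rewrite addnAC.
by apply: ipow_mul => //; apply: H.
Qed.

Lemma RR_intro (A : comPzRingType) (I : A -> Prop) n m z :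
  is_ideal I -> (1 <= m)%N ->
  (forall b, ipow I (n * m) b -> ipow I (n * m + n) (z * b)) ->
  ratliff_rush (ipow I n) z.
Proof.
move=> HI Hm H; exists m; split => // b /(ipow_ipow _ _ HI) Hb.
by apply/(ipow_ipow _ _ HI); rewrite mulnS addnC; apply: H.
Qed.

Lemma RR_elim (A : comPzRingType) (I : A -> Prop) n z :
  is_ideal I -> ratliff_rush (ipow I n) z ->
  exists m, (1 <= m)%N /\ forall t b, (n * m <= t)%N -> ipow I t b -> ipow I (t + n) (z * b).
Proof.
move=> HI [m [Hm H]]; exists m; split => // t b Ht Hb.
apply: (ipow_mul_gen HI _ Ht Hb) => u /(ipow_ipow _ _ HI) Hu.
by have := H u Hu => /(ipow_ipow _ _ HI); rewrite mulnS addnC.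
Qed.

Lemma RR1 (A : comPzRingType) (I : A -> Prop) x n :
  is_ideal I -> superficial I x -> (1 <= n)%N ->
  subI (colx (ipow I n.+1) x) (ratliff_rush (ipow I n)).
Proof.
move=> HI [Hx [c [Hc Hs]]] Hn z Hz.
apply: (RR_intro (m := c)) => // b Hb.
have Hcn : (c <= n * c)%N by rewrite leq_pmull.
have [H _] := Hs (n * c + n)%N (leq_trans Hcn (leq_addr _ _)) (z * b).
apply: H; split.
  rewrite mulrAC (_ : ((n * c + n).+1 = n.+1 + n * c)%N); last by rewrite addSn addnC.
  exact: ipow_mul.
rewrite mulrC; apply: (idealMr _ (ipow_ideal _ _)).
exact: (ipow_le HI Hcn).
Qed.

Lemma RR_self (A : comPzRingType) (I : A -> Prop) n :
  is_ideal I -> subI (ipow I n) (ratliff_rush (ipow I n)).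
Proof.
move=> HI z Hz; exists 1%N; split => // b Hb.
have HK := ipow_ideal I n.
apply: ipowS_gen; first by apply/(ipow1 HK).
by apply/(ipow1 HK).
Qed.

Lemma RR2 (A : comPzRingType) (I : A -> Prop) x n z :
  is_ideal I -> I x -> (1 <= n)%N ->
  ratliff_rush (ipow I n) z -> ratliff_rush (ipow I n.+1) (z * x).
Proof.
move=> HI Hx Hn /(RR_elim HI) [m [Hm H]].
apply: (RR_intro (m := n * m)); first by [].
  by rewrite muln_gt0 Hn Hm.
move=> b Hb; rewrite -mulrA.
have Hxb : ipow I (n.+1 * (n * m) + 1) (x * b).
  by rewrite mulrC; apply: ipow_mul => //; apply/(ipow1 HI).
have := H _ _ _ Hxb; rewrite (_ : (n.+1 * (n * m) + 1 + n = n.+1 * (n * m) + n.+1)%N).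
  apply; rewrite mulSn; apply: leq_trans (leq_addr _ _); exact: leq_addr.
by rewrite -addnA add1n.
Qed.
Lemma U_sup (A : comPzRingType) (I : A -> Prop) x n :
  I x -> subI (ipow I n) (colx (ipow I n.+1) x).
Proof. by move=> Hx z Hz; apply: ipowS_gen. Qed.

Lemma stable_col (A : comPzRingType) (I : A -> Prop) x n :
  is_ideal I -> superficial I x -> (1 <= n)%N ->
  eqI (ratliff_rush (ipow I n)) (ipow I n) -> subI (colx (ipow I n.+1) x) (ipow I n).
Proof. by move=> HI Hs Hn E z /(RR1 HI Hs Hn) /E. Qed.

Lemma unstable_col (A : comPzRingType) (I : A -> Prop) x n :
  is_ideal I -> I x -> (1 <= n)%N ->
  eqI (ratliff_rush (ipow I n.+1)) (ipow I n.+1) ->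
  subI (colx (ipow I n.+1) x) (ipow I n) ->
  eqI (ratliff_rush (ipow I n)) (ipow I n).
Proof.
move=> HI Hx Hn E H z; split; last exact: RR_self.
by move=> /(RR2 HI Hx Hn) /E; apply: H.
Qed.

Lemma key_rel (R S : comPzRingType) (f : {rmorphism R -> S}) (I : R -> Prop) x n a b c :
  (forall s, exists r, f r = s) -> (forall r, f r = 0 <-> principal x r) ->
  is_ideal I -> I x ->
  length_is (ipow I n.+1) a -> length_is (ipow I n) b ->
  length_is (ipow (ext_ideal f I) n.+1) c ->
  [/\ (a <= c + b)%N, (subI (colx (ipow I n.+1) x) (ipow I n) -> a = c + b)%N
    & (~ subI (colx (ipow I n.+1) x) (ipow I n) -> a < c + b)%N].
Proof.
move=> Hs Hk HI Hx Ha Hb Hc.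
have [l1 [l2 [H1 H2 ->]]] := length_split x (ipow_ideal I n.+1) Ha.
have Hc' : length_is (addx (ipow I n.+1) x) c.
  have := length_preim Hs (ipow_ideal _ _) Hc.
  apply: length_eqI => r; rewrite /preim.
  have E1 := ipow_ext n.+1 Hs HI (f r).
  have E2 := preim_img Hk (ipow_ideal I n.+1) r; rewrite /preim in E2.
  by rewrite E1 E2.
rewrite (length_uniq H1 Hc').
have Hsub := @U_sup _ I x n Hx.
have [l2' [Hl2' Hle]] := length_sub Hsub Hb.
rewrite -(length_uniq H2 Hl2') in Hle.
split.
- by rewrite leq_add2l.
- move=> HU; congr (_ + _)%N; apply: (length_uniq H2).
  by apply: length_eqI Hb => z; split; [apply: Hsub | apply: HU].
- move=> HU; rewrite ltn_add2l; apply: (length_ssub (ipow_ideal _ _) _ Hb H2).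
  by split.
Qed.
From mathcomp Require Import zify ring lra.

Lemma poly_eq_large (p q : {poly rat}) (N : int) :
  (forall t : int, N <= t -> p.[t%:~R] = q.[t%:~R]) -> p = q.
Proof.
move=> H; apply/eqP; rewrite -subr_eq0; apply/negPn/negP => Hne.
pose s := [seq ((N + i%:Z)%:~R : rat) | i <- iota 0 (size (p - q))].
have Hall : all (root (p - q)) s.
  apply/allP => r /mapP [i _ ->]; rewrite /root hornerD hornerN H ?subrr //.
  by rewrite lerDl.
have Hu : uniq s.
  by rewrite map_inj_uniq ?iota_uniq // => i j /intr_inj /addrI [].
by have := max_poly_roots Hne Hall Hu; rewrite size_map size_iota ltnn.
Qed.
Lemma final_arith (P P' : {poly rat}) (H H' : int -> nat) (nI nI' : int) (rI : nat) :
  (1 <= rI)%N ->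
  (forall t : int, nI < t -> P.[t%:~R] = (H t)%:R) -> P.[nI%:~R] <> (H nI)%:R ->
  (forall t : int, nI' < t -> P'.[t%:~R] = (H' t)%:R) -> P'.[nI'%:~R] <> (H' nI')%:R ->
  (forall t : int, (t <= 1) \/ (rI%:Z + 1 <= t) -> H t = (H' t + H (t - 1)%R)%N) ->
  ((2 <= rI)%N -> (H rI%:Z < H' rI%:Z + H (rI%:Z - 1)%R)%N) ->
  [/\ (rI%:Z - 1 < nI -> nI' = nI + 1), (nI = rI%:Z - 1 -> nI' <= nI + 1)
    & (nI < rI%:Z - 1 -> nI + 1 <= nI')].
Proof.
move=> Hr AP NP AP' NP' REL1 REL2.
have cB : forall t : int, ((t - 1)%:~R : rat) = t%:~R - 1 by move=> t; rewrite intrB.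
have EP' : P' = P - (P \Po ('X - 1)).
  apply: (poly_eq_large (N := Num.max (nI + 2) (Num.max (rI%:Z + 1) (nI' + 1)))).
  move=> t; rewrite !ge_max => /andP [h1 /andP [h2 h3]].
  rewrite hornerD hornerN horner_comp !hornerE.
  rewrite AP' ?AP; [|lia|lia]; rewrite -cB AP; last by lia.
  by rewrite (REL1 t) ?natrD ?addrK //; right.
have D : forall t : int, P'.[t%:~R] = P.[t%:~R] - P.[(t - 1)%:~R].
  by move=> t; rewrite EP' hornerD hornerN horner_comp !hornerE cB.
have B1 : forall t : int, (t <= 1) \/ (rI%:Z + 1 <= t) -> nI' < t -> t = nI + 1 -> False.
  move=> t Ht Ht' Et; apply: NP.
  have := D t; rewrite AP'// AP; last by lia.
  rewrite (REL1 t Ht) natrD (_ : t - 1 = nI); last by lia.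
  by move=> E; lra.
have B2 : forall t : int, rI%:Z + 1 <= t -> nI + 2 <= t -> t = nI' -> False.
  move=> t Ht Ht' Et; apply: NP'; rewrite -Et D AP; last by lia.
  rewrite AP; last by lia.
  by rewrite (REL1 t) ?natrD ?addrK //; right.
split.
- move=> h; case: (ltrgtP nI' (nI + 1)) => // h'.
    by exfalso; apply: (B1 (nI + 1)) => //; right; lia.
  by exfalso; apply: (B2 nI') => //; lia.
- move=> h; rewrite leNgt; apply/negP => h'.
  by apply: (B2 nI') => //; lia.
- move=> h; rewrite leNgt; apply/negP => h'.
  case: (leqP 2 rI) => h2.
    have := REL2 h2; have := D rI%:Z; rewrite AP'; last by lia.
    rewrite AP; last by lia. rewrite AP; last by lia.
    move=> E; rewrite -(ltr_nat rat) natrD; lra.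
  by apply: (B1 (nI + 1)) => //; left; lia.
Qed.
Definition Hz (hK : nat -> nat) (t : int) : nat := if (t <= 0)%R then 0%N else hK (absz t).

Lemma length_full (A : comPzRingType) : length_is (@fullI A) 0.
Proof.
split; first by exists (fun _ => @fullI A); apply: chain0.
move=> c [|k] // [_ B S]; have [_ N] := S 0%N (ltn0Sn _).
by case: N => z _; apply: B.
Qed.

Lemma agree_iff (A : comPzRingType) (K : A -> Prop) (hK : nat -> nat) Q t :
  (forall n, length_is (ipow K n) (hK n)) ->
  (HS_agree K Q t <-> Q.[t%:~R] = (Hz hK t)%:R).
Proof.
move=> Hh; rewrite /HS_agree /ipowz /Hz; case: ifP => _.
  split; first by move=> [l [Hl ->]]; rewrite (length_uniq Hl (length_full A)).
  by move=> E; exists 0%N; split => //; apply: length_full.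
split; first by move=> [l [Hl ->]]; rewrite (length_uniq Hl (Hh _)).
by move=> E; exists (hK (absz t)).
Qed.

Lemma Hz_nat (A : comPzRingType) (K : A -> Prop) (hK : nat -> nat) (n : nat) :
  (forall n, length_is (ipow K n) (hK n)) -> Hz hK n%:Z = hK n.
Proof.
move=> Hh; rewrite /Hz; case: n => // .
by rewrite lexx; apply: (length_uniq (length_full A) (Hh 0%N)).
Qed.

Lemma Hz_neg (hK : nat -> nat) t : (t <= 0)%R -> Hz hK t = 0%N.
Proof. by rewrite /Hz => ->. Qed.

Lemma transfer_S (R S : comPzRingType) (f : {rmorphism R -> S}) (I : R -> Prop) x n l :
  (forall s, exists r, f r = s) -> (forall r, f r = 0 <-> principal x r) ->
  is_ideal I ->
  length_is (addx (ipow I n) x) l -> length_is (ipow (ext_ideal f I) n) l.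
Proof.
move=> Hs Hk HI H; apply: (length_preim_inv Hs (ipow_ideal _ _)).
apply: length_eqI H => r; rewrite /preim.
have E1 := ipow_ext n Hs HI (f r).
have E2 := preim_img Hk (ipow_ideal I n) r; rewrite /preim in E2.
by rewrite E1 E2.
Qed.
Unset Implicit Arguments. Set Strict Implicit.
Theorem proposition3p1
  (R : comUnitRingType) (d : nat)
  (Hloc : is_local R) (Hnoeth : noetherian R)
  (Hdim : dim_is R d) (Hd : (1 <= d)%N) (HCM : depth_is R d)
  (Hres : infinite_residue_field R)
  (I : R -> Prop) (HI : m_primary I)
  (x : R) (Hx : superficial I x)
  (S : comNzRingType) (f : {rmorphism R -> S})
  (Hsurj : forall s : S, exists r, f r = s)
  (Hker : forall r, f r = 0 <-> principal x r)
  (nI : int) (rI : nat) (nI' : int)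
  (HnI : postulation I nI) (HrI : rho_is I rI)
  (HnI' : postulation (ext_ideal f I) nI') :
  [/\ (rI%:Z - 1 < nI -> nI' = nI + 1),
      (nI = rI%:Z - 1 -> nI' <= nI + 1) &
      (nI < rI%:Z - 1 -> nI + 1 <= nI')].
Proof.
have HIi : is_ideal I by case: HI.
have Hxi : I x by case: Hx.
case: HnI => P [AP NP]; case: HnI' => P' [AP' NP'].
have hex : forall n, exists l, length_is (ipow I n) l.
  move=> n; have Ht : nI < Posz (absz nI + n).+1 by lia.
  have [l [Hl _]] := AP _ Ht.
  have Hl' : length_is (ipow I (absz nI + n).+1) l.
    exact: Hl.
  have Hle : (n <= (absz nI + n).+1)%N by lia.
  by have [l' [Hl'' _]] := length_sub (ipow_le HIi Hle) Hl'; exists l'.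
pose h := fun n => proj1_sig (constructive_indefinite_description _ (hex n)).
have hh : forall n, length_is (ipow I n) (h n).
  by move=> n; exact: (proj2_sig (constructive_indefinite_description _ (hex n))).
have hex' : forall n, exists l, length_is (ipow (ext_ideal f I) n) l.
  move=> n; have HJx : subI (ipow I n) (addx (ipow I n) x) by apply: addx_sub.
  have [l [Hl _]] := length_sub HJx (hh n); exists l.
  exact: transfer_S Hsurj Hker HIi Hl.
pose h' := fun n => proj1_sig (constructive_indefinite_description _ (hex' n)).
have hh' : forall n, length_is (ipow (ext_ideal f I) n) (h' n).
  by move=> n; exact: (proj2_sig (constructive_indefinite_description _ (hex' n))).
case: (HrI) => Hr1 Hst Hmin.
apply: (final_arith (H := Hz h) (H' := Hz h')) => //.
- by move=> t Ht; apply/(agree_iff _ _ hh); apply: AP.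
- by move=> E; apply: NP; apply/(agree_iff _ _ hh).
- by move=> t Ht; apply/(agree_iff _ _ hh'); apply: AP'.
- by move=> E; apply: NP'; apply/(agree_iff _ _ hh').
- move=> t Ht; case: (lerP t 0) => Ht0.
    by rewrite !Hz_neg //; lia.
  have [n En] : exists n : nat, t = n.+1%:Z by exists (absz t).-1; lia.
  rewrite En (_ : n.+1%:Z - 1 = n%:Z); last by lia.
  rewrite !(Hz_nat _ hh) (Hz_nat _ hh').
  have [_ E _] := key_rel Hsurj Hker HIi Hxi (hh n.+1) (hh n) (hh' n.+1).
  apply: E; case: Ht => Ht.
    have -> : n = 0%N by lia.
    by move=> z.
  have Hn : (rI <= n)%N by lia.
  apply: (stable_col HIi Hx); first by lia.
  exact: Hst.
- move=> H2; have [k Ek] : exists k, rI = k.+1 by exists rI.-1; lia.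
  rewrite Ek (_ : k.+1%:Z - 1 = k%:Z); last by lia.
  rewrite !(Hz_nat _ hh) (Hz_nat _ hh').
  have [_ _ E] := key_rel Hsurj Hker HIi Hxi (hh k.+1) (hh k) (hh' k.+1).
  apply: E => Hsub.
  have Hk1 : (1 <= k)%N by lia.
  apply: (Hmin k Hk1); first by rewrite Ek.
  move=> m Hm; case: (ltngtP k m) => Hkm; last 2 first.
  + by lia.
  + subst m; apply: (unstable_col HIi Hxi Hk1) => //.
    by apply: Hst; rewrite Ek.
  + by apply: Hst; rewrite Ek.
Qed.
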